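(* Let $M$ be a tame paving matroid of rank $n$ on $[d]$ and let $\mathcal{Q}=\{Q_1,\ldots,Q_k\}$ be a partition of its set of dependent hyperplanes. Then $M(\mathcal{Q})\ge M$, i.e., every dependent set of $M$ is dependent in $M(\mathcal{Q})$.
   Context: A matroid of rank $n$ is paving if every circuit has size $n$ or $n+1$; a dependent hyperplane is a maximal subset of size at least $n$ all of whose $n$-element subsets are circuits; a paving matroid is tame if any three distinct dependent hyperplanes have empty intersection. Quasi-paving construction: for $n\le d$ and a collection $\mathcal{H}$ of subsets of $[d]$ any three of which have empty intersection, the matroid on $[d]$ whose circuits are (Type 1) the $(n-1)$-subsets contained in the intersection of two distinct members of $\mathcal{H}$, (Type 2) the $n$-subsets of a member of $\mathcal{H}$ containing no Type 1 set, (Type 3) the $(n+1)$-subsets containing no Type 1 or Type 2 set. For a partition $\mathcal{Q}=\{Q_1,\ldots,Q_k\}$ of the dependent hyperplanes of $M$, set $H_i=\bigcup_{l\in Q_i}l$ and let $M(\mathcal{Q})$ be the matroid obtained from the quasi-paving construction applied to $\mathcal{H}=\{H_1,\ldots,H_k\}$ and the integer $n$ (each element lies in at most two $H_i$ since $M$ is tame). *)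

(* Defs.v *)
From mathcomp Require Import all_boot.
Set Implicit Arguments. Unset Strict Implicit. Unset Printing Implicit Defensive.

Section Matroids.
Variable T : finType.

Definition is_matroid (I : {set {set T}}) : Prop :=
  [/\ set0 \in I,
      (forall A B : {set T}, B \in I -> A \subset B -> A \in I) &
      (forall A B : {set T}, A \in I -> B \in I -> #|A| < #|B| ->
         exists2 x, x \in B :\: A & x |: A \in I)].

Definition mrank (I : {set {set T}}) : nat := \max_(A in I) #|A|.

Definition circuit (I : {set {set T}}) (C : {set T}) : bool :=
  (C \notin I) && [forall D : {set T}, (D \proper C) ==> (D \in I)].

Definition paving (I : {set {set T}}) (n : nat) : Prop :=
  forall C : {set T}, circuit I C -> (#|C| == n) || (#|C| == n.+1).

Definition hyp_cand (I : {set {set T}}) (n : nat) (H : {set T}) : bool :=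
  (n <= #|H|) &&
  [forall S : {set T}, ((S \subset H) && (#|S| == n)) ==> circuit I S].

Definition dep_hyperplanes (I : {set {set T}}) (n : nat) : {set {set T}} :=
  [set H | maxset (hyp_cand I n) H].

Definition tame (I : {set {set T}}) (n : nat) : Prop :=
  forall H1 H2 H3 : {set T},
    H1 \in dep_hyperplanes I n -> H2 \in dep_hyperplanes I n ->
    H3 \in dep_hyperplanes I n ->
    H1 != H2 -> H1 != H3 -> H2 != H3 -> H1 :&: H2 :&: H3 = set0.

(* Quasi-paving construction M(Q) for a partition Q of the dependent
   hyperplanes: the members of the collection are H_i = cover Q_i,
   indexed by the blocks Q_i of Q. *)
Definition qp_type1 (n : nat) (Q : {set {set {set T}}}) (C : {set T}) : bool :=
  (#|C| == n.-1) &&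
  [exists Qi in Q, exists Qj in Q,
     (Qi != Qj) && (C \subset cover Qi :&: cover Qj)].

Definition qp_type2 (n : nat) (Q : {set {set {set T}}}) (C : {set T}) : bool :=
  (#|C| == n) && [exists Qi in Q, C \subset cover Qi] &&
  [forall D : {set T}, (D \subset C) ==> ~~ qp_type1 n Q D].

Definition qp_type3 (n : nat) (Q : {set {set {set T}}}) (C : {set T}) : bool :=
  (#|C| == n.+1) &&
  [forall D : {set T}, (D \subset C) ==>
     ~~ (qp_type1 n Q D || qp_type2 n Q D)].

Definition qp_circuit (n : nat) (Q : {set {set {set T}}}) (C : {set T}) : bool :=
  [|| qp_type1 n Q C, qp_type2 n Q C | qp_type3 n Q C].

Definition qp_dependent (n : nat) (Q : {set {set {set T}}}) (X : {set T}) : bool :=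
  [exists C : {set T}, (C \subset X) && qp_circuit n Q C].

End Matroids.

(* Main.v *)
Require Import Defs.
From mathcomp Require Import all_boot.

Theorem lemma4p3 (d n : nat) (I : {set {set 'I_d}})
  (Q : {set {set {set 'I_d}}}) :
  is_matroid I -> mrank I = n -> paving I n -> tame I n ->
  partition Q (dep_hyperplanes I n) ->
  forall X : {set 'I_d}, X \notin I -> qp_dependent n Q X.
Proof.
move=> _ _ Hpav _ Hpart X HX.
have [C /minsetP [HC Cmin] CX] := minset_exists (P := [pred D : {set 'I_d} | D \notin I]) HX.
have Ccirc : circuit I C.
  rewrite /circuit; move: HC; rewrite /= => -> /=; apply/forallP => D; apply/implyP => DC.
  apply/negPn/negP => HD.
  have E : D = C by apply: Cmin (proper_sub DC).
  by rewrite E properxx in DC.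
case/orP: (Hpav C Ccirc) => /eqP Csz.
- (* n-circuit: lies in a dependent hyperplane *)
  have hc : hyp_cand I n C.
    rewrite /hyp_cand Csz leqnn /=; apply/forallP => S; apply/implyP.
    case/andP => SC /eqP Ssz.
    have -> : S = C by apply/eqP; rewrite eqEcard SC Ssz Csz leqnn.
    exact: Ccirc.
  have [H Hmax CH] := maxset_exists hc.
  have HinD : H \in dep_hyperplanes I n by rewrite inE.
  move/andP: Hpart => [/eqP Hcov _].
  rewrite -Hcov in HinD.
  case/bigcupP: HinD => Qi QiQ HQi.
  have CQi : C \subset cover Qi.
    apply: subset_trans CH _; exact: bigcup_sup HQi.
  case: (boolP [exists D : {set 'I_d}, (D \subset C) && qp_type1 n Q D]).
  + case/existsP => D /andP [DC D1].
    apply/existsP; exists D; rewrite (subset_trans DC CX) /qp_circuit D1 //.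
  + rewrite negb_exists => /forallP Hno.
    apply/existsP; exists C; rewrite CX /= /qp_circuit.
    apply/or3P; apply: Or32.
    rewrite /qp_type2 Csz eqxx /=; apply/andP; split.
      by apply/existsP; exists Qi; rewrite QiQ CQi.
    apply/forallP => D; apply/implyP => DC.
    by move: (Hno D); rewrite DC.
- case: (boolP [exists D : {set 'I_d}, (D \subset C) && (qp_type1 n Q D || qp_type2 n Q D)]).
  + case/existsP => D /andP [DC D12].
    apply/existsP; exists D; rewrite (subset_trans DC CX) /qp_circuit.
    by case/orP: D12 => ->; rewrite ?orbT.
  + rewrite negb_exists => /forallP Hno.
    apply/existsP; exists C; rewrite CX /= /qp_circuit.
    apply/or3P; apply: Or33.
    rewrite /qp_type3 Csz eqxx /=.
    apply/forallP => D; apply/implyP => DC.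
    by move: (Hno D); rewrite DC.
Qed.
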